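(* Let $\mathfrak{k}$ be a field, $n\ge 2$, $r_1,\dots,r_n$ positive integers, ${\bf B}=\{(i_1,\dots,i_n):1\le i_j\le r_j\}$, and ${\mathcal A}=(x_{i_1\ldots i_n})_{(i_1,\ldots,i_n)\in{\bf B}}$ a box-shaped matrix of distinct indeterminates, with polynomial ring $\mathfrak{k}[{\mathcal A}]$. For $l=1,\dots,n$ let ${\mathcal A}_l=(x_{i_1\ldots i_n})_{(i_1,\ldots,i_n)\in{\bf B},\ i_l<r_l}$, ${\bf B}_l=\{(i_1,\dots,i_n)\in{\bf B}: i_l=r_l\}$, and $I_l=I_2({\mathcal A}_l)\mathfrak{k}[{\mathcal A}]+(x_{i_1\ldots i_n}:(i_1,\dots,i_n)\in{\bf B}_l)$. Then: (a) for any $l\neq s$ in $\{1,\dots,n\}$, $I_l\cap I_s=I_2({\mathcal A})+(x_{i_1\ldots i_n}:(i_1,\dots,i_n)\in{\bf B}_l\cap{\bf B}_s)$; (b) for any distinct $l_1,\dots,l_t\in\{1,\dots,n\}$ with $2\le t\le n$, $\bigcap_{j=1}^t I_{l_j}=I_2({\mathcal A})+(x_{i_1\ldots i_n}:(i_1,\dots,i_n)\in\bigcap_{j=1}^t{\bf B}_{l_j})$.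
   Context: $\mathfrak{k}$ is algebraically closed of characteristic $0$. For a box-shaped matrix $(a_{i_1\ldots i_n})$ indexed by a box of integral points, a $2\times2$ minor about the $l$-th coordinate is $a_{i_1\ldots i_l\ldots i_n}a_{j_1\ldots j_l\ldots j_n}-a_{i_1\ldots i_{l-1}j_li_{l+1}\ldots i_n}a_{j_1\ldots j_{l-1}i_lj_{l+1}\ldots j_n}$ for two index points; the ideal of $2\times2$ minors $I_2(\cdot)$ is generated by the $2\times 2$ minors about all coordinates. *)

(* Defs.v *)
From HB Require Import structures.
From mathcomp Require Import all_boot all_order all_algebra.
From mathcomp Require Import mpoly.
Set Implicit Arguments. Unset Strict Implicit. Unset Printing Implicit Defensive.
Import GRing.Theory.
Local Open Scope ring_scope.

(* Index points of the box B = prod_j {0,...,r j - 1} (0-based indices). *)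
Definition box (n : nat) (r : 'I_n -> nat) : finType :=
  {dffun forall j : 'I_n, 'I_(r j)}.

Definition polyA (k : fieldType) (n : nat) (r : 'I_n -> nat) :=
  {mpoly k[#|box r|]}.

Definition xvar (k : fieldType) (n : nat) (r : 'I_n -> nat) (p : box r)
  : polyA k r := 'X_(enum_rank p).

Definition swapc (n : nat) (r : 'I_n -> nat) (p q : box r) (m : 'I_n) : box r :=
  finfun (fun j => if j == m then q j else p j).

Definition ideal_gen (R : comNzRingType) (S : R -> Prop) (x : R) : Prop :=
  exists s : seq (R * R), (forall c, c \in s -> S c.2) /\
    x = \sum_(c <- s) c.1 * c.2.

(* 2x2 minors (about every coordinate) of the sub-box-matrix with index set
   P (P is always a product of intervals below, hence closed under swapc). *)
Definition minor2 (k : fieldType) (n : nat) (r : 'I_n -> nat)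
  (P : pred (box r)) (f : polyA k r) : Prop :=
  exists p q m, P p /\ P q /\
    f = xvar k p * xvar k q - xvar k (swapc p q m) * xvar k (swapc q p m).

Definition Bl (n : nat) (r : 'I_n -> nat) (l : 'I_n) : pred (box r) :=
  fun p => (p l : nat) == (r l).-1.

Definition Al (n : nat) (r : 'I_n -> nat) (l : 'I_n) : pred (box r) :=
  fun p => ((p l : nat) < (r l).-1)%N.

Definition Il_gens (k : fieldType) (n : nat) (r : 'I_n -> nat) (l : 'I_n)
  (f : polyA k r) : Prop :=
  minor2 (Al l) f \/ exists p, Bl l p /\ f = xvar k p.

Definition rhs_gens (k : fieldType) (n : nat) (r : 'I_n -> nat)
  (C : pred (box r)) (f : polyA k r) : Prop :=
  minor2 (fun _ => true) f \/ exists p, C p /\ f = xvar k p.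

(* Main.v *)
Require Import Defs.
From HB Require Import structures.
From mathcomp Require Import all_boot all_order all_algebra.
From mathcomp Require Import mpoly.
From mathcomp Require Import ring zify.
Set Implicit Arguments. Unset Strict Implicit. Unset Printing Implicit Defensive.
Import GRing.Theory.
Local Open Scope ring_scope.

Section Ideal.
Variable (R : comNzRingType) (S : R -> Prop).

Lemma ig0 : ideal_gen S 0.
Proof. by exists [::]; split => //; rewrite big_nil. Qed.

Lemma igD x y : ideal_gen S x -> ideal_gen S y -> ideal_gen S (x + y).
Proof.
move=> [s [Hs ->]] [t [Ht ->]]; exists (s ++ t); split; last by rewrite big_cat.
by move=> c; rewrite mem_cat => /orP [/Hs|/Ht].
Qed.

Lemma igM a x : ideal_gen S x -> ideal_gen S (a * x).
Proof.
move=> [s [Hs ->]]; exists [seq (a * c.1, c.2) | c <- s]; split.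
  by move=> c /mapP [d /Hs Hd ->].
by rewrite big_map mulr_sumr; apply: eq_bigr => c _; rewrite mulrA.
Qed.

Lemma igMr a x : ideal_gen S x -> ideal_gen S (x * a).
Proof. by rewrite mulrC; apply: igM. Qed.

Lemma igN x : ideal_gen S x -> ideal_gen S (- x).
Proof. by move=> h; rewrite -mulN1r; apply: igM. Qed.

Lemma igB x y : ideal_gen S x -> ideal_gen S y -> ideal_gen S (x - y).
Proof. by move=> hx hy; apply: igD => //; apply: igN. Qed.

Lemma igZ (c : R) x : ideal_gen S x -> ideal_gen S (c * x).
Proof. exact: igM. Qed.

Lemma ig_gen g : S g -> ideal_gen S g.
Proof.
by move=> h; exists [:: (1, g)]; split; [move=> c; rewrite inE => /eqP -> | rewrite big_seq1 mul1r].
Qed.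

Lemma ig_sum (I : eqType) (s : seq I) (F : I -> R) :
  (forall i, i \in s -> ideal_gen S (F i)) -> ideal_gen S (\sum_(i <- s) F i).
Proof.
elim: s => [|a s IH] H; first by rewrite big_nil; apply: ig0.
rewrite big_cons; apply: igD; first by apply: H; rewrite inE eqxx.
by apply: IH => i hi; apply: H; rewrite inE hi orbT.
Qed.
End Ideal.

Lemma ig_mono (R : comNzRingType) (S T : R -> Prop) x :
  (forall g, S g -> ideal_gen T g) -> ideal_gen S x -> ideal_gen T x.
Proof.
move=> H [s [Hs ->]]; apply: ig_sum => c hc; apply: igM; exact: H (Hs _ hc).
Qed.

Section Main.
Variables (k : fieldType) (n : nat) (r : 'I_n -> nat).
Local Notation B := (box r).
Local Notation R := (polyA k r).
Local Notation X := (xvar k).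
Local Notation I2 := (ideal_gen (@minor2 k n r (fun _ => true))).

Definition prodX (s : seq B) : R := \prod_(p <- s) X p.
Definition colB (j : 'I_n) (s : seq B) : seq 'I_(r j) := map (fun p : B => p j) s.

Lemma swapcE (p q : B) m j : swapc p q m j = if j == m then q j else p j.
Proof. by rewrite /swapc ffunE. Qed.

Lemma I2_minor (p q : B) m : I2 (X p * X q - X (swapc p q m) * X (swapc q p m)).
Proof. by apply: ig_gen; exists p, q, m. Qed.

Lemma perm_swap2 (T : eqType) (a b : T) c1 c2 :
  perm_eq (a :: c1 ++ b :: c2) (b :: c1 ++ a :: c2).
Proof.
apply/permP => P /=; rewrite !count_cat /=; lia.
Qed.

Lemma gather (q : B) (js : seq 'I_n) (s : seq B) : s != [::] ->
  (forall j, q j \in colB j s) ->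
  exists (p : B) (t : seq B), [/\ I2 (prodX s - prodX (p :: t)),
    (forall j, perm_eq (colB j s) (colB j (p :: t))), size t = (size s).-1
    & forall j, j \in js -> p j = q j].
Proof.
move=> sn0 qin; elim: js => [|j js IH]; last move: IH => [p [t [H1 H2 H3 H4]]].
  case: s sn0 {qin} => [//|p t] _; exists p, t; split => //.
  by rewrite subrr; apply: ig0.
have [pq|pq] := eqVneq (p j) (q j).
  exists p, t; split => // j'; rewrite inE => /orP [/eqP -> //|]; exact: H4.
have : q j \in colB j (p :: t) by rewrite -(perm_mem (H2 j)); apply: qin.
rewrite /= inE eq_sym (negbTE pq) /= => /mapP [y yt qy].
case/splitPr: yt H1 H2 H3 => t1 t2 H1 H2 H3.
exists (swapc p y j), (t1 ++ swapc y p j :: t2); split.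
- have -> : prodX s - prodX (swapc p y j :: t1 ++ swapc y p j :: t2) =
     (prodX s - prodX (p :: t1 ++ y :: t2)) + (prodX t1 * prodX t2) *
     (X p * X y - X (swapc p y j) * X (swapc y p j)).
    rewrite /prodX !big_cons !big_cat !big_cons /=; ring.
  by apply: igD => //; apply: igM; apply: I2_minor.
- move=> j'; apply: perm_trans (H2 j') _.
  rewrite /colB /= !map_cat /= !swapcE.
  case: eqP => [->|_] //; exact: perm_swap2.
- by rewrite -H3 !size_cat.
- move=> j'; rewrite swapcE inE; case: eqP => [-> _ //|_ /=]; exact: H4.
Qed.

Lemma box_eq (p q : B) : (forall j, p j = q j) -> p = q.
Proof. by move=> h; apply/ffunP. Qed.

Lemma table (s s' : seq B) : size s = size s' ->
  (forall j, perm_eq (colB j s) (colB j s')) -> I2 (prodX s - prodX s').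
Proof.
elim: s' s => [|q s'' IH] s.
  by case: s => // _ _; rewrite subrr; apply: ig0.
case: s => [//|p0 t0] /= [hs] hp.
have qin : forall j, q j \in colB j (p0 :: t0).
  by move=> j; rewrite (perm_mem (hp j)) mem_head.
have [p [t [H1 H2 H3 H4]]] := gather (enum 'I_n) (isT : p0 :: t0 != [::]) qin.
have pq : p = q by apply: box_eq => j; apply: H4; rewrite mem_enum.
subst p.
have ht : forall j, perm_eq (colB j t) (colB j s'').
  move=> j; have h := H2 j; rewrite perm_sym in h; have := perm_trans h (hp j).
  by rewrite /= perm_cons.
have -> : prodX (p0 :: t0) - prodX (q :: s'') =
  (prodX (p0 :: t0) - prodX (q :: t)) + X q * (prodX t - prodX s'').
  rewrite /prodX !big_cons; ring.
apply: igD => //; apply: igM; apply: IH => //.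
by rewrite H3 /= hs.
Qed.
End Main.

Section Mon.
Variables (k : fieldType) (n : nat) (r : 'I_n -> nat).
Local Notation B := (box r).
Local Notation N := #|box r|.
Local Notation R := (polyA k r).
Local Notation X := (xvar k).
Local Notation I2 := (ideal_gen (@minor2 k n r (fun _ => true))).
Local Notation mon := ('X_{1..N}).

Definition pts (m : mon) : seq 'I_N := flatten [seq nseq (m v) v | v <- index_enum 'I_N].

Lemma count_pts (P : pred 'I_N) m : count P (pts m) = (\sum_(v < N) P v * m v)%N.
Proof.
rewrite /pts count_flatten sumnE !big_map /=.
by apply: eq_bigr => v _; rewrite count_nseq.
Qed.

Lemma pts_mem v m : (v \in pts m) = (0 < m v)%N.
Proof.
rewrite -has_pred1 has_count count_pts (bigD1 v) //= eqxx mul1n big1 ?addn0 //.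
by move=> w /negbTE; rewrite /= => ->.
Qed.

Lemma pts_D m1 m2 : perm_eq (pts (m1 + m2)) (pts m1 ++ pts m2).
Proof.
apply/permP => P; rewrite count_cat !count_pts -big_split /=.
by apply: eq_bigr => v _; rewrite mnmDE mulnDr.
Qed.

Lemma pts_U v : perm_eq (pts U_(v)) [:: v].
Proof.
apply/permP => P; rewrite count_pts /= addn0 (bigD1 v) //= mnm1E eqxx muln1.
by rewrite big1 ?addn0 // => w wv; rewrite mnm1E eq_sym (negbTE wv) muln0.
Qed.

Lemma sum_ind (T : eqType) (s : seq T) w :
  (\sum_(v <- s) (v == w))%N = count (pred1 w) s.
Proof. by elim: s => [|a s IH]; rewrite ?big_nil ?big_cons ?IH. Qed.

Lemma mon_pts m : m = (\sum_(v <- pts m) U_(v))%MM.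
Proof.
apply/mnmP => w; rewrite mnm_sumE.
under eq_bigr do rewrite mnm1E.
rewrite sum_ind count_pts (bigD1 w) //= eqxx mul1n big1 ?addn0 //.
by move=> u /negbTE; rewrite /= => ->.
Qed.

Definition ptsB m : seq B := map enum_val (pts m).

Lemma X_pts m : 'X_[m] = prodX k (ptsB m) :> R.
Proof.
rewrite {1}[m]mon_pts -(big_map (fun v => U_(v)%MM) xpredT id) -mpolyX_prod.
rewrite /prodX /ptsB !big_map; apply: eq_bigr => v _.
by rewrite /xvar enum_valK.
Qed.

Lemma xvarE (p : B) : X p = 'X_[U_(enum_rank p)].
Proof. by []. Qed.

Variable p0 : B.

Definition colr j m := colB j (ptsB m).
Definition geo j := (fun x y : 'I_(r j) => (y <= x)%N).
Definition srt j m := sort (@geo j) (colr j m).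
Definition rowm m (a : nat) : B := finfun (fun j => nth (p0 j) (srt j m) a).
Definition rows m := mkseq (rowm m) (size (pts m)).
Definition Nf m : mon := (\sum_(p <- rows m) U_(enum_rank p))%MM.

Lemma geo_total j : total (@geo j).
Proof. by move=> x y; rewrite /geo leq_total. Qed.
Lemma geo_trans j : transitive (@geo j).
Proof. by move=> x y z; rewrite /geo => h1 h2; apply: leq_trans h2 h1. Qed.
Lemma geo_anti j : antisymmetric (@geo j).
Proof. by move=> x y; rewrite /geo => /andP [h1 h2]; apply/val_inj/eqP; rewrite eqn_leq h1 h2. Qed.

Lemma X_Nf m : 'X_[Nf m] = prodX k (rows m) :> R.
Proof.
rewrite /Nf -(big_map (fun p => U_(enum_rank p)%MM) xpredT id) -mpolyX_prod.
by rewrite /prodX !big_map.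
Qed.

Lemma size_srt j m : size (srt j m) = size (pts m).
Proof. by rewrite size_sort /colr /colB /ptsB !size_map. Qed.

Lemma col_rows j m : colB j (rows m) = srt j m.
Proof.
rewrite /colB /rows /mkseq -map_comp.
rewrite -[in RHS](mkseq_nth (p0 j) (srt j m)) size_srt /mkseq.
by apply: eq_map => a /=; rewrite /rowm ffunE.
Qed.

Lemma I2_Nf m : I2 ('X_[m] - 'X_[Nf m]).
Proof.
rewrite X_pts X_Nf; apply: table.
  by rewrite /ptsB /rows size_map size_mkseq.
by move=> j; rewrite col_rows /srt perm_sym perm_sort.
Qed.

Lemma Nf_eq m1 m2 : size (pts m1) = size (pts m2) ->
  (forall j, perm_eq (colr j m1) (colr j m2)) -> Nf m1 = Nf m2.
Proof.
move=> hs hc; have hsrt : forall j, srt j m1 = srt j m2.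
  by move=> j; apply/perm_sortP; [apply: geo_total|apply: geo_trans|apply: geo_anti|].
rewrite /Nf /rows hs; congr (\big[_/_]_(p <- _) _); apply: eq_map => a.
by apply: box_eq => j; rewrite /rowm !ffunE hsrt.
Qed.

Lemma colr_D j m1 m2 : perm_eq (colr j (m1 + m2)) (colr j m1 ++ colr j m2).
Proof. by rewrite /colr /colB /ptsB -!map_cat; do 2 apply: perm_map; apply: pts_D. Qed.

Lemma colr_U j (p : B) : perm_eq (colr j U_(enum_rank p)) [:: p j].
Proof.
have := perm_map (fun v => (enum_val v : B) j) (pts_U (enum_rank p)).
by rewrite /colr /colB /ptsB -map_comp /= enum_rankK.
Qed.

Lemma size_pts_D m1 m2 : size (pts (m1 + m2)) = (size (pts m1) + size (pts m2))%N.
Proof. by rewrite (perm_size (pts_D m1 m2)) size_cat. Qed.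

Lemma size_pts_U v : size (pts U_(v)) = 1%N.
Proof. by rewrite (perm_size (pts_U v)). Qed.

Lemma colr3 j u (p q : B) : perm_eq (colr j (u + U_(enum_rank p) + U_(enum_rank q))%MM)
  (colr j u ++ [:: p j; q j]).
Proof.
apply: perm_trans (colr_D _ _ _) _.
apply: perm_trans (perm_cat (colr_D _ _ _) (colr_U _ _)) _.
rewrite -catA perm_cat2l.
by have := perm_cat (colr_U j p) (perm_refl [:: q j]).
Qed.

Lemma Nf_minor u (p q : B) m :
  Nf (u + U_(enum_rank p) + U_(enum_rank q))%MM =
  Nf (u + U_(enum_rank (swapc p q m)) + U_(enum_rank (swapc q p m)))%MM.
Proof.
apply: Nf_eq; first by rewrite !size_pts_D !size_pts_U.
move=> j; apply: perm_trans (colr3 _ _ _ _) _.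
rewrite perm_sym; apply: perm_trans (colr3 _ _ _ _) _.
rewrite perm_cat2l !swapcE; case: eqP => _ //.
by apply/permP => P /=; lia.
Qed.

Definition hasl (l : 'I_n) (m : mon) :=
  [exists v : 'I_N, (0 < m v)%N && (((enum_val v : B) l : nat) == (r l).-1)].

Lemma hasl_row l m : hasl l m ->
  (0 < size (pts m))%N /\ ((rowm m 0 l : nat) = (r l).-1).
Proof.
case/existsP => v /andP [mv /eqP vl].
have vin : v \in pts m by rewrite pts_mem.
split; first by case: (pts m) vin.
have xin : (enum_val v : B) l \in srt l m.
  by rewrite mem_sort /colr /colB /ptsB -map_comp; apply: map_f.
rewrite /rowm ffunE.
have := sort_sorted (@geo_total l) (colr l m); rewrite -/(srt l m).
case: (srt l m) xin => [//|y S] /=; rewrite inE => hx hs.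
have ylt := ltn_ord y.
case/orP: hx => [/eqP <-|xS]; first by rewrite vl.
have := allP (order_path_min (@geo_trans l) hs) _ xS; rewrite /geo vl.
move=> h; apply/eqP; rewrite eqn_leq h andbT; lia.
Qed.

Lemma hasl_Nf l m : hasl l m -> hasl l (Nf m).
Proof.
move=> /hasl_row [hs hl]; apply/existsP; exists (enum_rank (rowm m 0)).
rewrite enum_rankK hl eqxx andbT /Nf mnm_sumE.
rewrite /rows; case: (size (pts m)) hs => [//|d] _.
by rewrite /mkseq /= big_cons mnm1E eqxx.
Qed.

Lemma hasl_U l (p : B) u : Bl l p -> hasl l (u + U_(enum_rank p))%MM.
Proof.
move=> hp; apply/existsP; exists (enum_rank p).
by rewrite enum_rankK mnmDE mnm1E eqxx addn1 /=.
Qed.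

Definition nu (f : R) : R := \sum_(m <- msupp f) f@_m *: 'X_[Nf m].

Lemma sum_supp (f : R) (G : mon -> R) s : uniq s -> {subset msupp f <= s} ->
  \sum_(m <- msupp f) f@_m *: G m = \sum_(m <- s) f@_m *: G m.
Proof.
move=> us sub.
rewrite [RHS](bigID (fun m => m \in msupp f)) /= [X in _ + X]big1 ?addr0; last first.
  by move=> m /memN_msupp_eq0 ->; rewrite scale0r.
rewrite -[RHS]big_filter; apply/perm_big; apply: uniq_perm.
- exact: msupp_uniq.
- exact: filter_uniq.
- by move=> x; rewrite mem_filter; apply/idP/andP => [h|[]//]; split => //; apply: sub.
Qed.

Lemma nuD f g : nu (f + g) = nu f + nu g.
Proof.
set s := undup (msupp f ++ msupp g).
have us : uniq s by apply: undup_uniq.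
rewrite /nu (@sum_supp (f + g) _ s us); last by move=> x /msuppD_le; rewrite mem_undup.
rewrite (@sum_supp f _ s us); last by move=> x h; rewrite mem_undup mem_cat h.
rewrite (@sum_supp g _ s us); last by move=> x h; rewrite mem_undup mem_cat h orbT.
by rewrite -big_split; apply: eq_bigr => m _; rewrite mcoeffD scalerDl.
Qed.

Lemma nuZ c f : nu (c *: f) = c *: nu f.
Proof.
rewrite /nu (@sum_supp (c *: f) _ _ (msupp_uniq f)); last by move=> x /msuppZ_le.
by rewrite scaler_sumr; apply: eq_bigr => m _; rewrite mcoeffZ scalerA.
Qed.

Lemma nu0 : nu 0 = 0.
Proof. by rewrite /nu msupp0 big_nil. Qed.

Lemma nuB f g : nu (f - g) = nu f - nu g.
Proof. by rewrite nuD -scaleN1r nuZ scaleN1r. Qed.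

Lemma nu_sum (I : Type) (s : seq I) (F : I -> R) : nu (\sum_(i <- s) F i) = \sum_(i <- s) nu (F i).
Proof. by elim: s => [|a s IH]; rewrite ?big_nil ?nu0 // !big_cons nuD IH. Qed.

Lemma nuX m : nu 'X_[m] = 'X_[Nf m].
Proof. by rewrite /nu msuppX big_seq1 mcoeffX eqxx scale1r. Qed.

Definition Qp l (h : R) := forall n0, ~~ hasl l n0 -> h@_n0 = 0.

Lemma QD l h1 h2 : Qp l h1 -> Qp l h2 -> Qp l (h1 + h2).
Proof. by move=> q1 q2 n0 hn; rewrite mcoeffD q1 ?q2 ?addr0. Qed.

Lemma Q0 l : Qp l 0.
Proof. by move=> n0 _; rewrite mcoeff0. Qed.

Lemma QZ l c h : Qp l h -> Qp l (c *: h).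
Proof. by move=> q n0 hn; rewrite mcoeffZ q ?mulr0. Qed.

Lemma Q_sum l (I : eqType) (s : seq I) (F : I -> R) :
  (forall i, i \in s -> Qp l (F i)) -> Qp l (\sum_(i <- s) F i).
Proof.
elim: s => [|a s IH] h; rewrite ?big_nil ?big_cons; first exact: Q0.
apply: QD; first by apply: h; rewrite mem_head.
by apply: IH => i hi; apply: h; rewrite inE hi orbT.
Qed.

Lemma Q_gen l g u : Il_gens l g -> Qp l (nu ('X_[u] * g)).
Proof.
case=> [[p [q [m [_ [_ ->]]]]]|[p [hp ->]]].
  rewrite mulrBr !mulrA !xvarE -!mpolyXD nuB !nuX (Nf_minor _ _ _ m) subrr; exact: Q0.
rewrite xvarE -mpolyXD nuX => n0 hn; rewrite mcoeffX.
case: eqP => // e; move: hn; rewrite -e.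
by rewrite hasl_Nf // hasl_U.
Qed.

Lemma Q_ideal l f : ideal_gen (Il_gens l) f -> Qp l (nu f).
Proof.
case=> s [hs ->]; rewrite nu_sum; apply: Q_sum => c /hs hc.
rewrite [c.1]mpolyE mulr_suml nu_sum; apply: Q_sum => u _.
by rewrite -scalerAl nuZ; apply: QZ; apply: Q_gen.
Qed.

Section Hard.
Variables (I : finType) (L : I -> 'I_n) (i0 : I) (C : pred B).
Hypothesis hC : forall p, C p = [forall i, Bl (L i) p].

Lemma hard (f : R) : (forall i, ideal_gen (Il_gens (L i)) f) -> ideal_gen (rhs_gens C) f.
Proof.
move=> hf.
have I2J : forall g, I2 g -> ideal_gen (rhs_gens C) g.
  by move=> g; apply: ig_mono => h hh; apply: ig_gen; left.
have -> : f = (f - nu f) + nu f by rewrite subrK.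
apply: igD.
  rewrite {1}[f]mpolyE /nu -sumrB; apply: ig_sum => m _.
  by rewrite -scalerBr -mul_mpolyC; apply: igM; apply: I2J; apply: I2_Nf.
rewrite [nu f]mpolyE; apply: ig_sum => n0 hn0; rewrite -mul_mpolyC; apply: igM.
have hall : forall i, hasl (L i) n0.
  move=> i; case: (boolP (hasl (L i) n0)) => // hn; move: hn0.
  by rewrite mcoeff_msupp (Q_ideal (hf i) hn) eqxx.
have -> : 'X_[n0] = ('X_[n0] - 'X_[Nf n0]) + 'X_[Nf n0] :> R by rewrite subrK.
apply: igD; first by apply: I2J; apply: I2_Nf.
have [hs _] := hasl_row (hall i0).
rewrite X_Nf /rows; case: (size (pts n0)) hs => [//|d] _.
rewrite /mkseq /= /prodX big_cons.
apply: igMr; apply: ig_gen; right; exists (rowm n0 0); split => //.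
rewrite hC; apply/forallP => i; rewrite /Bl; apply/eqP; exact: (hasl_row (hall i)).2.
Qed.

Lemma minor_in_Il l (p q : B) m :
  ideal_gen (Il_gens l) (X p * X q - X (swapc p q m) * X (swapc q p m)).
Proof.
have AB : forall x : B, ~~ Al l x -> Bl l x.
  move=> x; rewrite /Al /Bl -leqNgt => h; have := ltn_ord (x l); lia.
have gB : forall x : B, Bl l x -> ideal_gen (Il_gens l) (X x).
  by move=> x h; apply: ig_gen; right; exists x.
case: (boolP (Al l p && Al l q)) => [/andP [ap aq]|].
  by apply: ig_gen; left; exists p, q, m.
rewrite negb_and => /orP [/AB bp|/AB bq]; apply: igB.
- apply: igMr; exact: gB.
- case: (eqVneq m l) => [e|ne].
  + by apply: igM; apply: gB; rewrite /Bl swapcE e eqxx.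
  + by apply: igMr; apply: gB; rewrite /Bl swapcE [l == m]eq_sym (negbTE ne).
- apply: igM; exact: gB.
- case: (eqVneq m l) => [e|ne].
  + by apply: igMr; apply: gB; rewrite /Bl swapcE e eqxx.
  + by apply: igM; apply: gB; rewrite /Bl swapcE [l == m]eq_sym (negbTE ne).
Qed.

Lemma easy i (f : R) : ideal_gen (rhs_gens C) f -> ideal_gen (Il_gens (L i)) f.
Proof.
apply: ig_mono => g [[p [q [m [_ [_ ->]]]]]|[p [hp ->]]].
  exact: minor_in_Il.
apply: ig_gen; right; exists p; split => //.
by move: hp; rewrite hC => /forallP.
Qed.
End Hard.
End Mon.

Unset Implicit Arguments.
Set Strict Implicit.

Theorem lemma1p1 (k : fieldType) (n : nat) (r : 'I_n -> nat) :
  (2 <= n)%N -> (forall j, (0 < r j)%N) ->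
  (forall l s : 'I_n, l != s -> forall f : polyA k r,
     (ideal_gen (Il_gens l) f /\ ideal_gen (Il_gens s) f) <->
     ideal_gen (rhs_gens (fun p => Bl l p && Bl s p)) f)
  /\
  (forall (t : nat) (L : 'I_t -> 'I_n), (2 <= t <= n)%N -> injective L ->
     forall f : polyA k r,
     (forall j : 'I_t, ideal_gen (Il_gens (L j)) f) <->
     ideal_gen (rhs_gens (fun p => [forall j : 'I_t, Bl (L j) p])) f).
Proof.
move=> hn hr.
pose p0 : box r := finfun (fun j => Ordinal (hr j)).
split.
  move=> l s _ f.
  pose L := fun b : bool => if b then l else s.
  have hC : forall p : box r, (Bl l p && Bl s p) = [forall b, Bl (L b) p].
    move=> p; apply/andP/forallP => [[h1 h2] [] //|h]; split.
      exact: (h true).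
    exact: (h false).
  split.
    move=> [h1 h2]; apply: (hard p0 (L := L) true hC) => -[] //.
  by move=> h; split; [apply: (easy (L := L) hC true h) | apply: (easy (L := L) hC false h)].
move=> t L /andP [ht _] _ f.
have i0 : 'I_t by exists 0%N; apply: leq_trans ht.
have hC : forall p : box r, [forall j : 'I_t, Bl (L j) p] = [forall j, Bl (L j) p] by [].
split; first by apply: (hard p0 i0 hC).
by move=> h j; apply: (easy hC j h).
Qed.
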